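(* Let $d\ge 1$ and let $n$ be an odd positive integer. Let $v_1,\ldots,v_n\in\mathbb{R}^d$ be non-zero vectors with $\|v_i\|_2\le 1$ for all $i$, let $\varepsilon_1,\ldots,\varepsilon_n$ be independent Rademacher random variables, and set $S_n=v_1\varepsilon_1+\cdots+v_n\varepsilon_n$ and $R_{n-1}=\varepsilon_1+\cdots+\varepsilon_{n-1}$. Then $$\mathbb{P}(S_n=0)\le \mathbb{P}\left(\tfrac12 R_{n-1}+\varepsilon_n=0\right).$$
   Context: A Rademacher random variable $\varepsilon$ satisfies $\mathbb{P}(\varepsilon=1)=\mathbb{P}(\varepsilon=-1)=\tfrac12$. *)

(* Defs.v *)
From mathcomp Require Import all_boot all_order all_algebra.
From mathcomp Require Import reals.
Set Implicit Arguments. Unset Strict Implicit. Unset Printing Implicit Defensive.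
Import Order.TTheory GRing.Theory Num.Theory.
Local Open Scope ring_scope.

(* A realisation of n independent Rademacher variables: the sample space is
   the set of sign patterns {ffun 'I_n -> bool} with the uniform
   probability (the product of the fair coin laws); eps_i = rad (e i). *)
Definition rad (R : realType) (b : bool) : R := if b then 1 else -1.

Definition rad_prob (R : realType) (n : nat) (E : pred {ffun 'I_n -> bool}) : R :=
  #|[set e | E e]|%:R / 2%:R ^+ n.

Definition norm2 (R : realType) (d : nat) (v : 'rV[R]_d) : R :=
  Num.sqrt (\sum_(j < d) v ord0 j ^+ 2).

Definition Ssum (R : realType) (n d : nat) (v : 'I_n -> 'rV[R]_d)
  (e : {ffun 'I_n -> bool}) : 'rV[R]_d :=
  \sum_(i < n) rad R (e i) *: v i.

(* R_{n-1} = eps_1 + ... + eps_{n-1} (indices 0..n-2 in 0-based form) *)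
Definition Rpart (R : realType) (n : nat) (e : {ffun 'I_n -> bool}) : R :=
  \sum_(i < n | (i < n.-1)%N) rad R (e i).

(* eps_n (the last variable, 0-based index n-1) *)
Definition last_eps (R : realType) (n : nat) (e : {ffun 'I_n -> bool}) : R :=
  \sum_(i < n | val i == n.-1) rad R (e i).

(* Main.v *)
Require Import Defs.
From mathcomp Require Import all_boot all_order all_algebra all_fingroup.
From mathcomp Require Import reals.
From mathcomp Require Import zify ring lra.

(* Proof strategy: reduce to a scalar problem via a generic linear functional,
   turn the zero-sum configurations into a complement-closed antichain of subsets
   of an odd set, and bound such antichains with a Katona cyclic-permutation
   double-counting argument. *)

Set Implicit Arguments. Unset Strict Implicit. Unset Printing Implicit Defensive.

Definition addm (m r j : nat) : nat := if r + j < m.+1 then r + j else r + j - m.+1.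
Definition distm (m r x : nat) : nat := if r <= x then x - r else x + m.+1 - r.

Definition rot m (r : 'I_m.+1) (x : 'I_m.+1) : 'I_m.+1 := inord (addm m x r).

Lemma addm_lt m (r j : nat) : r < m.+1 -> j < m.+1 -> addm m r j < m.+1.
Proof. rewrite /addm; case: ifP; lia. Qed.

Lemma val_rot m (r x : 'I_m.+1) : val (rot r x) = addm m x r.
Proof. by rewrite /rot /= inordK // addm_lt. Qed.

Lemma rot_inj m (r : 'I_m.+1) : injective (rot r).
Proof.
move=> x y /(congr1 val); rewrite !val_rot /addm => h; apply: val_inj => /=.
have := ltn_ord x; have := ltn_ord y; have := ltn_ord r.
move: h; case: ifP; case: ifP; lia.
Qed.

Definition rotp m (r : 'I_m.+1) : {perm 'I_m.+1} := perm (@rot_inj m r).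

Definition arc m (r : 'I_m.+1) (j : nat) : {set 'I_m.+1} :=
  [set x : 'I_m.+1 | distm m r x < j].

Definition pre m (s : {perm 'I_m.+1}) (j : nat) : {set 'I_m.+1} :=
  s @: [set i : 'I_m.+1 | i < j].

Lemma rot_image m (r : 'I_m.+1) j : rotp r @: [set i : 'I_m.+1 | i < j] = arc r j.
Proof.
apply/setP => x; rewrite inE; apply/imsetP/idP.
  case=> i; rewrite inE permE => hi ->; rewrite val_rot /distm /addm.
  have := ltn_ord i; have := ltn_ord r; move: hi.
  case: ifP; case: ifP; lia.
move=> hx.
have hd : distm m r x < m.+1.
  rewrite /distm; have := ltn_ord x; have := ltn_ord r; case: ifP; lia.
exists (Ordinal hd); first by rewrite inE.
apply: val_inj; rewrite permE val_rot /= /addm /distm.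
have := ltn_ord x; have := ltn_ord r; move: hx; rewrite /distm.
case: ifP; case: ifP; lia.
Qed.

Lemma pre_rot m (s : {perm 'I_m.+1}) r j : pre (rotp r * s) j = s @: arc r j.
Proof.
rewrite /pre -rot_image -imset_comp; apply: eq_imset => x /=.
by rewrite permM.
Qed.

Lemma card_lt m j : j <= m.+1 -> #|[set i : 'I_m.+1 | i < j]| = j.
Proof.
move=> hj.
have -> : [set i : 'I_m.+1 | i < j] = (widen_ord hj) @: [set: 'I_j].
  apply/setP => x; rewrite inE; apply/idP/imsetP.
    move=> hx; exists (Ordinal hx); rewrite ?inE //; exact: val_inj.
  by case=> y _ ->; rewrite /= ltn_ord.
have inj : injective (widen_ord hj).
  by move=> a b h; apply: val_inj; move/(congr1 val): h.
by rewrite (card_imset _ inj) cardsT card_ord.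
Qed.

Lemma card_arc m (r : 'I_m.+1) j : j <= m.+1 -> #|arc r j| = j.
Proof. by move=> hj; rewrite -rot_image (card_imset _ (@perm_inj _ _)) card_lt. Qed.

Lemma card_pre m (s : {perm 'I_m.+1}) j : j <= m.+1 -> #|pre s j| = j.
Proof. by move=> hj; rewrite /pre (card_imset _ (@perm_inj _ _)) card_lt. Qed.

Lemma arc_mono m (r : 'I_m.+1) j j' : j <= j' -> arc r j \subset arc r j'.
Proof. move=> h; apply/subsetP => x; rewrite !inE => hx; exact: leq_trans hx h. Qed.

Definition shift m (r : 'I_m.+1) (j : nat) : 'I_m.+1 := inord (addm m r j).

Lemma arcC m (r : 'I_m.+1) j : j <= m.+1 -> ~: arc r j = arc (shift r j) (m.+1 - j).
Proof.
move=> hj; apply/setP => x; rewrite !inE /shift.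
have ha : addm m r j < m.+1.
  rewrite /addm; have := ltn_ord r; case: ifP; lia.
rewrite (inordK ha) /addm.
have := ltn_ord x; have := ltn_ord r; move: hj.
case: ifP => ?; rewrite /distm; repeat (case: ifP => ?); lia.
Qed.

Lemma val_shift m (r : 'I_m.+1) j : j <= m.+1 -> val (shift r j) = addm m r j.
Proof.
move=> hj; rewrite /shift /= inordK //.
rewrite /addm; have := ltn_ord r; case: ifP => ?; lia.
Qed.

Lemma bin_up n i : i.*2.+1 <= n -> 'C(n, i) <= 'C(n, i.+1).
Proof.
move=> h; have := mul_bin_left n i.
have : i.+1 * 'C(n, i) <= (n - i) * 'C(n, i) by apply: leq_mul => //; lia.
move=> h1 h2; rewrite -h2 in h1.
by rewrite leq_pmul2l in h1.
Qed.

Lemma binmax k j : 'C(k.*2.+1, j) <= 'C(k.*2.+1, k).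
Proof.
have up : forall i, i <= k -> 'C(k.*2.+1, i) <= 'C(k.*2.+1, k).
  move=> i hi; move: {2}(k - i) (erefl (k - i)) => t; elim: t i hi => [|t IH] i hi ht.
    by have -> : i = k by lia.
  apply: leq_trans (bin_up _) (IH i.+1 _ _); lia.
case: (leqP j k) => hj; first exact: up.
case: (leqP j k.*2.+1) => hj2; last by rewrite bin_small.
rewrite -bin_sub //; apply: up; lia.
Qed.

Lemma arcs_bound (m : nat) (A : {set {set 'I_m.+1}}) :
  odd m.+1 ->
  (forall S U, S \in A -> U \in A -> S \subset U -> S = U) ->
  (forall S, S \in A -> ~: S \in A) ->
  \sum_(r : 'I_m.+1) \sum_(j < m.+2) (arc r j \in A) * 'C(m.+1, j) <= m * 'C(m.+1, m./2).
Proof.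
move=> hodd hanti hcomp.
have hm : m = (m./2).*2.
  by have := odd_double_half m; move: hodd => /= /negbTE ->.
set P := [set x : 'I_m.+1 * 'I_m.+2 | arc x.1 x.2 \in A].
have e1 : \sum_(r : 'I_m.+1) \sum_(j < m.+2) (arc r j \in A) * 'C(m.+1, j)
          = \sum_(x in P) 'C(m.+1, x.2).
  rewrite pair_big /= [RHS]big_mkcond /=; apply: eq_bigr => x _.
  by rewrite inE; case: (arc x.1 x.2 \in A); rewrite ?mul1n ?mul0n.
rewrite e1.
have e2 : \sum_(x in P) 'C(m.+1, x.2) <= #|P| * 'C(m.+1, m./2).
  rewrite -sum_nat_const; apply: leq_sum => x _.
  by have := binmax (m./2) x.2; rewrite -hm.
apply: leq_trans e2 _; rewrite leq_mul2r; apply/orP; right.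
have hP1 : #|P| <= m.+1.
  have inj : {in P &, injective (fun x : 'I_m.+1 * 'I_m.+2 => x.1)}.
    move=> [r j] [r' j']; rewrite !inE /= => hj hj' er; subst r'.
    have key : forall a b : 'I_m.+2, arc r a \in A -> arc r b \in A -> a <= b -> a = b.
      move=> a b ha hb hab.
      have e := hanti _ _ ha hb (arc_mono r hab).
      have : #|arc r a| = #|arc r b| by rewrite e.
      have a1 : a <= m.+1 by rewrite -ltnS ltn_ord.
      have b1 : b <= m.+1 by rewrite -ltnS ltn_ord.
      rewrite (card_arc r a1) (card_arc r b1) => eab.
      exact: val_inj.
    case: (leqP j j') => h; first by rewrite (key j j' hj hj' h).
    by rewrite (key j' j hj' hj (ltnW h)).
  rewrite -(card_in_imset inj); apply: leq_trans (max_card _) _; by rewrite card_ord.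
pose g (x : 'I_m.+1 * 'I_m.+2) : 'I_m.+1 * 'I_m.+2 := (shift x.1 x.2, inord (m.+1 - x.2)).
have gg : involutive g.
  move=> [r j]; rewrite /g /=.
  have hj : j <= m.+1 by rewrite -ltnS ltn_ord.
  have ei : nat_of_ord (inord (m.+1 - j) : 'I_m.+2) = m.+1 - j by rewrite inordK // ltnS leq_subr.
  congr pair; apply: val_inj; rewrite /= ?ei.
    rewrite !val_shift ?leq_subr // /addm; have := ltn_ord r.
    case: (ltnP (r + j) m.+1) => ? /=; case: ifP => ?; lia.
  rewrite /= inordK; lia.
have gP : forall x, (g x \in P) = (x \in P).
  have h : forall x, x \in P -> g x \in P.
    move=> [r j]; rewrite !inE /g /= => hx.
    rewrite inordK; last by rewrite ltnS leq_subr.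
    rewrite -arcC; [exact: hcomp | by rewrite -ltnS ltn_ord].
  move=> x; apply/idP/idP; last exact: h.
  by move/h; rewrite gg.
have ginj : injective g := inv_inj gg.
have eS : \sum_(x in P) (x.2 : nat) = \sum_(x in P) (m.+1 - x.2).
  rewrite (reindex_inj ginj) /=; apply: eq_big => x; first by rewrite gP.
  by move=> _; rewrite /g /= inordK // ltnS leq_subr.
have e3 : (\sum_(x in P) (x.2 : nat)).*2 = #|P| * m.+1.
  rewrite -addnn {2}eS -big_split /= -sum_nat_const; apply: eq_bigr => x _.
  have := ltn_ord x.2; lia.
have hev : ~~ odd #|P|.
  apply/negP => ho; have := congr1 odd e3; rewrite odd_double oddM ho /=.
  by move: hodd => /= ->.
move: hev hP1 hodd; rewrite /=; move: #|P| => p.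
move=> /negbTE hp hp1 /negbTE hm'.
have : p != m.+1 by apply/eqP => e; subst p; rewrite /= hm' in hp.
lia.
Qed.

Lemma mem_imset_perm (T : finType) (s : {perm T}) (X : {set T}) z :
  (z \in s @: X) = ((s^-1)%g z \in X).
Proof. by rewrite -{1}(permKV s z) mem_imset //; exact: perm_inj. Qed.

Lemma imset_permC (T : finType) (s : {perm T}) (X : {set T}) :
  s @: (~: X) = ~: (s @: X).
Proof. by apply/setP => z; rewrite !inE !mem_imset_perm inE. Qed.

Lemma perm_trans (T : finType) (S S' : {set T}) :
  #|S| = #|S'| -> exists t : {perm T}, t @: S = S'.
Proof.
move: {2}#|S :\: S'| (erefl #|S :\: S'|) => n; elim: n S => [|n IH] S hn hc.
  exists 1%g; have : S \subset S' by rewrite -setD_eq0 -cards_eq0 hn.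
  move=> sub; have -> : S = S' by apply/eqP; rewrite eqEcard sub hc leqnn.
  by apply/setP => z; rewrite mem_imset_perm invg1 perm1.
have : 0 < #|S :\: S'| by rewrite hn.
rewrite card_gt0 => /set0Pn [x hx].
have : 0 < #|S' :\: S|.
  have e1 := cardsID S' S; have e2 := cardsID S S'.
  rewrite setIC in e1; lia.
rewrite card_gt0 => /set0Pn [y hy].
move: hx hy; rewrite !inE => /andP [hxS' hxS] /andP [hyS hyS'].
have hxy : x != y by apply/eqP => e; subst y; rewrite hxS in hyS.
set S1 := tperm x y @: S.
have eD : S1 :\: S' = (S :\: S') :\ x.
  apply/setP => z; rewrite !inE mem_imset_perm tpermV.
  have [->|hzx] := eqVneq z x; first by rewrite tpermL (negbTE hyS) andbF.
  have [->|hzy] := eqVneq z y; first by rewrite tpermR hyS'.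
  rewrite tpermD; [by [] | by rewrite eq_sym | by rewrite eq_sym].
have hn1 : #|S1 :\: S'| = n.
  rewrite eD; have := cardsD1 x (S :\: S'); rewrite !inE hxS hxS' hn /=; lia.
have hc1 : #|S1| = #|S'| by rewrite /S1 card_imset //; exact: perm_inj.
have [t1 ht1] := IH S1 hn1 hc1.
exists (tperm x y * t1)%g; rewrite -ht1 /S1 -imset_comp; apply: eq_imset => z.
by rewrite permM.
Qed.

Lemma cnt m (S : {set 'I_m.+1}) :
  'C(m.+1, #|S|) * \sum_(s : {perm 'I_m.+1}) (pre s #|S| == S) = #|{perm 'I_m.+1}|.
Proof.
set k := #|S|.
have hk : k <= m.+1 by rewrite /k; have := max_card S; rewrite card_ord.
have same : forall S' : {set 'I_m.+1}, #|S'| = k ->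
    \sum_(s : {perm 'I_m.+1}) (pre s k == S') = \sum_(s : {perm 'I_m.+1}) (pre s k == S).
  move=> S' hS'; have [t ht] := perm_trans (esym hS').
  rewrite (reindex_inj (mulIg t)) /=; apply: eq_bigr => s _.
  have -> : pre (s * t)%g k = t @: pre s k.
    by rewrite /pre -imset_comp; apply: eq_imset => z; rewrite /= permM.
  by rewrite -ht (inj_eq (imset_inj (@perm_inj _ t))).
have tot : \sum_(S' in [set S' : {set 'I_m.+1} | #|S'| == k])
             \sum_(s : {perm 'I_m.+1}) (pre s k == S') = #|{perm 'I_m.+1}|.
  rewrite exchange_big /= -sum1_card; apply: eq_bigr => s _.
  rewrite (bigD1 (pre s k)) /=; last by rewrite inE card_pre.
  rewrite eqxx big1 // => S' /andP [_ h]; by rewrite eq_sym (negbTE h).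
rewrite -tot (eq_bigr (fun _ => \sum_(s : {perm 'I_m.+1}) (pre s k == S))); last first.
  by move=> S'; rewrite inE => /eqP; exact: same.
by rewrite sum_nat_const card_draws card_ord mulnC.
Qed.

Lemma core m (A : {set {set 'I_m.+1}}) :
  odd m.+1 ->
  (forall S U, S \in A -> U \in A -> S \subset U -> S = U) ->
  (forall S, S \in A -> ~: S \in A) ->
  #|A| * m.+1 <= m * 'C(m.+1, m./2).
Proof.
move=> hodd hanti hcomp.
set N := #|{perm 'I_m.+1}|.
have hN : 0 < N by apply/card_gt0P; exists 1%g.
pose F (s : {perm 'I_m.+1}) := \sum_(j < m.+2) (pre s j \in A) * 'C(m.+1, j).
have dc : \sum_s F s = #|A| * N.
  have step : forall s (j : 'I_m.+2), (pre s j \in A) * 'C(m.+1, j)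
      = \sum_(S in A) (pre s j == S) * 'C(m.+1, #|S|).
    move=> s j; have hj : j <= m.+1 by rewrite -ltnS ltn_ord.
    case: (boolP (pre s j \in A)) => h.
      rewrite mul1n (bigD1 (pre s j)) //= eqxx mul1n big1 ?addn0 ?card_pre //.
      by move=> S /andP [_ hS]; rewrite eq_sym (negbTE hS).
    rewrite big1 // => S hS; case: eqP => // e; by rewrite e hS in h.
  rewrite /F (eq_bigr (fun s => \sum_(j < m.+2) \sum_(S in A) (pre s j == S) * 'C(m.+1, #|S|)));
    last by move=> s _; apply: eq_bigr => j _; exact: step.
  rewrite exchange_big /=.
  rewrite (eq_bigr (fun j : 'I_m.+2 => \sum_(S in A) \sum_s (pre s j == S) * 'C(m.+1, #|S|)));
    last by move=> j _; rewrite exchange_big.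
  rewrite exchange_big /= -sum_nat_const; apply: eq_bigr => S hS.
  have hk : #|S| < m.+2 by rewrite ltnS; have := max_card S; rewrite card_ord.
  rewrite (bigD1 (Ordinal hk)) //= [X in _ + X]big1 ?addn0.
    by rewrite -big_distrl /= mulnC cnt.
  move=> j hj; apply: big1 => s _.
  case: eqP => // e; exfalso; move: hj => /negP; apply; apply/eqP/val_inj => /=.
  by rewrite -e card_pre // -ltnS ltn_ord.
have rot : forall r, \sum_s F s = \sum_s F (rotp r * s)%g.
  by move=> r; rewrite (reindex_inj (mulgI (rotp r))).
have e2 : \sum_s \sum_(r : 'I_m.+1) F (rotp r * s)%g = m.+1 * \sum_s F s.
  rewrite exchange_big /=.
  transitivity (\sum_(r : 'I_m.+1) \sum_s F s).
    by apply: eq_bigr => r _; rewrite -rot.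
  by rewrite big_const_ord iter_addn_0 mulnC.
have e3 : forall s : {perm 'I_m.+1}, \sum_(r : 'I_m.+1) F (rotp r * s)%g <= m * 'C(m.+1, m./2).
  move=> s; set As := [set X : {set 'I_m.+1} | s @: X \in A].
  have -> : \sum_(r : 'I_m.+1) F (rotp r * s)%g
       = \sum_(r : 'I_m.+1) \sum_(j < m.+2) (arc r j \in As) * 'C(m.+1, j).
    apply: eq_bigr => r _; apply: eq_bigr => j _; by rewrite pre_rot inE.
  apply: arcs_bound => //.
    move=> X U; rewrite !inE => hX hU hXU.
    have := hanti _ _ hX hU (imsetS _ hXU); apply: (imset_inj (@perm_inj _ s)).
  by move=> X; rewrite !inE imset_permC; exact: hcomp.
have : m.+1 * (#|A| * N) <= N * (m * 'C(m.+1, m./2)).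
  rewrite -dc -e2 -sum_nat_const; apply: leq_sum => s _; exact: e3.
have -> : m.+1 * (#|A| * N) = N * (#|A| * m.+1) by lia.
by rewrite leq_pmul2l.
Qed.

Definition Xset m (k : nat) (x : 'I_m.+1) : {set {set 'I_m.+1}} :=
  [set S : {set 'I_m.+1} | (#|S| == k) && (x \in S)].

Lemma Xset_le m k (x y : 'I_m.+1) : #|Xset k x| <= #|Xset k y|.
Proof.
set t := tperm x y.
have inj : injective (fun S : {set 'I_m.+1} => t @: S) := imset_inj (@perm_inj _ t).
rewrite -(card_imset _ inj); apply: subset_leq_card; apply/subsetP => U /imsetP [S].
rewrite !inE => /andP [/eqP hS hx] ->.
rewrite (card_imset _ (@perm_inj _ t)) hS eqxx /= mem_imset_perm tpermV /t tpermR hx.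
by [].
Qed.

Lemma cardX m k : m.+1 * #|Xset k (ord_max : 'I_m.+1)| = k * 'C(m.+1, k).
Proof.
have eq : forall x : 'I_m.+1, #|Xset k x| = #|Xset k (ord_max : 'I_m.+1)|.
  by move=> x; apply/eqP; rewrite eqn_leq !Xset_le.
have e1 : \sum_(x : 'I_m.+1) #|Xset k x| = m.+1 * #|Xset k (ord_max : 'I_m.+1)|.
  by rewrite (eq_bigr _ (fun x _ => eq x)) big_const_ord iter_addn_0 mulnC.
rewrite -e1.
have e2 : forall x : 'I_m.+1, #|Xset k x| = \sum_(S in [set S : {set 'I_m.+1} | #|S| == k]) (x \in S).
  move=> x; rewrite -sum1_card big_mkcond [RHS]big_mkcond /=; apply: eq_bigr => S _.
  by rewrite !inE; case: (#|S| == k); case: (x \in S).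
rewrite (eq_bigr _ (fun x _ => e2 x)) exchange_big /=.
rewrite (eq_bigr (fun _ => k)); first by rewrite sum_nat_const card_draws card_ord mulnC.
move=> S; rewrite inE => /eqP <-.
by rewrite -sum1_card [RHS]big_mkcond /=; apply: eq_bigr => x _; case: (x \in S).
Qed.

Unset Implicit Arguments. Set Strict Implicit.
Import Order.TTheory GRing.Theory Num.Theory.
Local Open Scope ring_scope.

Lemma rad_mul (R : realType) (a : R) (b : bool) : a != 0 ->
  Defs.rad R b * a = if b == (0 < a) then `|a| else - `|a|.
Proof.
move=> ha; have [hp|hn] := ltrP 0 a.
  by rewrite (gtr0_norm hp); case: b; rewrite /Defs.rad /= ?mul1r ?mulN1r.
have hn' : a < 0 by rewrite lt_neqAle ha hn.
by rewrite (ltr0_norm hn') opprK; case: b; rewrite /Defs.rad /= ?mul1r ?mulN1r.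
Qed.

Lemma scalar_bound (R : realType) m (a : 'I_m.+1 -> R) : odd m.+1 -> (forall i, a i != 0) ->
  leq (muln #|[set e : {ffun 'I_m.+1 -> bool} | \sum_i Defs.rad R (e i) * a i == 0]| m.+1)
    (muln m 'C(m.+1, m./2)).
Proof.
move=> hodd ha.
pose b i := `|a i|.
have hb : forall i, 0 < b i by move=> i; rewrite /b normr_gt0.
pose A := [set S : {set 'I_m.+1} | \sum_i (if i \in S then b i else - b i) == 0].
pose f (e : {ffun 'I_m.+1 -> bool}) := [set i | e i == (0 < a i)].
have finj : injective f.
  move=> e e' h; apply/ffunP => i.
  have : (i \in f e) = (i \in f e') by rewrite h.
  rewrite /f !inE; case: (e i); case: (e' i); case: (0 < a i) => //=.
have hsub : f @: [set e : {ffun 'I_m.+1 -> bool} | \sum_i Defs.rad R (e i) * a i == 0] \subset A.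
  apply/subsetP => X /imsetP [e]; rewrite !inE => /eqP he ->; apply/eqP; rewrite -[RHS]he.
  by apply: eq_bigr => i _; rewrite rad_mul // /f inE.
apply: leq_trans (@core m A hodd _ _).
  by rewrite leq_mul2r -(card_imset _ finj) subset_leq_card ?orbT.
  move=> X U; rewrite /A !inE => /eqP hX /eqP hU hXU.
  have h0 : \sum_i ((if i \in U then b i else - b i) - (if i \in X then b i else - b i)) = 0.
    by rewrite sumrB hX hU subrr.
  have hge : forall i, true -> 0 <= (if i \in U then b i else - b i) - (if i \in X then b i else - b i).
    move=> i _; case hiX: (i \in X).
      by rewrite (subsetP hXU _ hiX) subrr.
    case: (i \in U); last by rewrite subrr.
    by rewrite opprK; apply: addr_ge0; apply: ltW.
  have := psumr_eq0P hge h0.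
  move=> hall; apply/eqP; rewrite eqEsubset hXU /=; apply/subsetP => i hiU.
  case hiX: (i \in X) => //; have := hall i isT; rewrite hiU hiX opprK => /eqP.
  by rewrite paddr_eq0 ?ltW // => /andP [/eqP h _]; have := hb i; rewrite h ltxx.
move=> X; rewrite /A !inE => /eqP hX; apply/eqP.
have -> : \sum_i (if i \in ~: X then b i else - b i) = - \sum_i (if i \in X then b i else - b i).
  by rewrite -sumrN; apply: eq_bigr => i _; rewrite inE; case: (i \in X); rewrite ?opprK.
by rewrite hX oppr0.
Qed.

Lemma rad_nat (R : realType) (b : bool) : Defs.rad R b = (b%:R) *+ 2 - 1.
Proof. by case: b; rewrite /Defs.rad /=; [rewrite mulr2n addrK | rewrite mul0rn sub0r]. Qed.

Definition csum m (S : {set 'I_m.+1}) : nat := \sum_(i < m) (widen_ord (leqnSn m) i \in S).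
Arguments csum {m}.

Lemma card_split m (S : {set 'I_m.+1}) :
  #|S| = (csum S + (ord_max \in S))%N.
Proof.
by rewrite -sum1_card big_mkcond /= big_ord_recr /=; congr (_ + _)%N.
Qed.

Lemma Rpart_emb (R : realType) m (S : {set 'I_m.+1}) :
  Rpart R [ffun i => i \in S] =
  (csum S)%:R *+ 2 - m%:R.
Proof.
rewrite /Rpart big_mkcond big_ord_recr /= ltnn addr0.
rewrite (eq_bigr (fun i : 'I_m => Defs.rad R (widen_ord (leqnSn m) i \in S))); last first.
  by move=> i _; rewrite ltn_ord ffunE.
rewrite (eq_bigr (fun i : 'I_m => ((widen_ord (leqnSn m) i \in S)%:R) *+ 2 - 1)); last first.
  by move=> i _; rewrite rad_nat.
by rewrite sumrB sumrMnl natr_sum sumr_const card_ord /csum.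
Qed.

Lemma last_emb (R : realType) m (S : {set 'I_m.+1}) :
  last_eps R [ffun i => i \in S] = Defs.rad R (ord_max \in S).
Proof.
by rewrite /last_eps (big_pred1 (ord_max : 'I_m.+1)) ?ffunE // => i /=; rewrite -val_eqE.
Qed.

Lemma rhs_bound (R : realType) m : odd m.+1 ->
  leq (muln 2 #|Xset m./2 (ord_max : 'I_m.+1)|)
      #|[set e : {ffun 'I_m.+1 -> bool} | 2^-1 * Rpart R e + last_eps R e == 0]|.
Proof.
move=> hodd.
have hm : m = (m./2).*2%N.
  by have := odd_double_half m; move: hodd => /= /negbTE ->.
set k := m./2; set X := Xset k (ord_max : 'I_m.+1).
set Y := X :|: [set ~: S | S in X].
have hdisj : X :&: [set ~: S | S in X] = set0.
  apply/setP => S; rewrite !inE; apply/negP => /andP [hS /imsetP [S0 hS0 e]].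
  move: hS hS0; rewrite /X !inE e => /andP [/eqP h1 _] /andP [/eqP h2 _].
  have := cardsC S0; rewrite h1 h2 card_ord; lia.
have cY : #|Y| = (2 * #|X|)%N.
  by rewrite /Y cardsU hdisj cards0 subn0 (card_imset _ (@setC_inj _)) mul2n addnn.
pose emb (S : {set 'I_m.+1}) : {ffun 'I_m.+1 -> bool} := [ffun i => i \in S].
have embi : injective emb.
  move=> S S' h; apply/setP => i.
  by have := congr1 (fun f : {ffun 'I_m.+1 -> bool} => f i) h; rewrite /emb !ffunE.
rewrite -cY -(card_imset _ embi); apply: subset_leq_card; apply/subsetP => e /imsetP [S hS ->].
rewrite inE /emb Rpart_emb last_emb; move: hS; rewrite /Y /X !inE.
have hcs := @card_split m S.
move: (csum S) hcs => c hcs.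
have hmR : (m%:R : R) = (k%:R) *+ 2 by rewrite hm -mul2n natrM mulr_natl.
rewrite hmR !mulr2n.
case/orP.
  move=> /andP [/eqP hk hx]; rewrite hx in hcs *; rewrite /Defs.rad /=.
  have hc : (c + 1 = k)%N by rewrite -hk hcs.
  have hcR : (k%:R : R) = c%:R + 1 by rewrite -hc natrD.
  by rewrite hcR; apply/eqP; field.
case/imsetP => S0; rewrite !inE => /andP [/eqP hk hx] eS; subst S.
rewrite inE hx /Defs.rad /=; rewrite inE hx /= addn0 in hcs.
have hC := cardsC S0; rewrite card_ord hk hcs in hC.
have hc : c = (k + 1)%N by lia.
by rewrite hc natrD; apply/eqP; field.
Qed.

Definition phi (R : realType) d (t : R) (x : 'rV[R]_d) : R := \sum_(j < d) x ord0 j * t ^+ j.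
Arguments phi {R d}.

Lemma phi_sum (R : realType) d n (t : R) (c : 'I_n -> R) (v : 'I_n -> 'rV[R]_d) :
  phi t (\sum_(i < n) c i *: v i) = \sum_(i < n) c i * phi t (v i).
Proof.
rewrite /phi.
rewrite (eq_bigr (fun j : 'I_d => \sum_(i < n) c i * (v i ord0 j * t ^+ j))); last first.
  by move=> j _; rewrite summxE mulr_suml; apply: eq_bigr => i _; rewrite mxE mulrA.
by rewrite exchange_big /=; apply: eq_bigr => i _; rewrite mulr_sumr.
Qed.

Lemma exists_t (R : realType) d n (v : 'I_n -> 'rV[R]_d.+1) :
  (forall i, v i != 0) -> exists t : R, forall i, phi t (v i) != 0.
Proof.
move=> hv.
pose p i := \poly_(j < d.+1) v i ord0 (inord j).
have hp : forall i, p i != 0.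
  move=> i; case: (@pickP 'I_d.+1 (fun j : 'I_d.+1 => v i ord0 j != 0)) => [j hj | h].
    apply/eqP => e; have := congr1 (fun q : {poly R} => q`_j) e.
    by rewrite /p coef_poly ltn_ord inord_val coef0 => /eqP; rewrite (negbTE hj).
  exfalso; move/eqP: (hv i); apply; apply/rowP => j.
  rewrite mxE; apply/eqP; have := h j; by move=> /negbFE.
pose P := \prod_(i < n) p i.
have hP : P != 0 by apply/prodf_neq0 => i _; exact: hp.
pose rs := [seq (i%:R : R) | i <- iota 0 (size P)].
have : ~~ all (root P) rs.
  apply/negP => hall.
  suff : uniq rs by move=> /(max_poly_roots hP hall); rewrite size_map size_iota ltnn.
  by rewrite map_inj_uniq ?iota_uniq // => x y /eqP; rewrite eqr_nat => /eqP.
move=> hna; have [t _ ht] := allPn hna; exists t => i.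
have : P.[t] != 0 by exact: ht.
rewrite horner_prod => /prodf_neq0 /(_ i isT).
by rewrite /p horner_poly /phi; under eq_bigr do rewrite inord_val.
Qed.

Theorem theorem4 (R : realType) (d n : nat) (hd : (1 <= d)%N) (hn : odd n)
  (v : 'I_n -> 'rV[R]_d)
  (hv0 : forall i, v i != 0) (hv1 : forall i, norm2 (v i) <= 1) :
  rad_prob R (fun e => Ssum v e == 0)
  <= rad_prob R (fun e : {ffun 'I_n -> bool} => 2^-1 * Rpart R e + last_eps R e == 0).
Proof.
case: d hd v hv0 hv1 => [//|d] _ v hv0 _.
case: n hn v hv0 => [//|m] hodd v hv0.
rewrite /rad_prob; apply: ler_wpM2r; first by rewrite invr_ge0 exprn_ge0.
rewrite ler_nat.
have [t ht] := @exists_t R d m.+1 v hv0.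
pose a i := phi t (v i).
have hsub : [set e : {ffun 'I_m.+1 -> bool} | Ssum v e == 0]
    \subset [set e : {ffun 'I_m.+1 -> bool} | \sum_i Defs.rad R (e i) * a i == 0].
  apply/subsetP => e; rewrite !inE => /eqP he.
  rewrite /a -phi_sum; rewrite /Ssum in he; rewrite he /phi.
  by rewrite big1 // => j _; rewrite mxE mul0r.
have h1 := @scalar_bound R m a hodd ht.
have h2 := @rhs_bound R m hodd.
have h3 := cardX m m./2.
have hm : m = (m./2).*2%N.
  by have := odd_double_half m; move: hodd => /= /negbTE ->.
have h4 := subset_leq_card hsub.
set L := #|[set e : {ffun 'I_m.+1 -> bool} | Ssum v e == 0]| in h4 *.
set L' := #|[set e : {ffun 'I_m.+1 -> bool} | \sum_i Defs.rad R (e i) * a i == 0]| in h1 h4.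
set Rr := #|[set e : {ffun 'I_m.+1 -> bool} | 2^-1 * Rpart R e + last_eps R e == 0]| in h2 *.
set X := #|Xset m./2 (ord_max : 'I_m.+1)| in h2 h3.
set C := 'C(m.+1, m./2) in h1 h3.
have : (L * m.+1 <= Rr * m.+1)%N.
  apply: leq_trans (_ : (m * C <= _)%N).
    apply: leq_trans (_ : (L' * m.+1 <= _)%N) => //; by rewrite leq_mul2r h4 orbT.
  rewrite {1}hm -mul2n -mulnA -h3.
  by rewrite mulnCA [(Rr * _)%N]mulnC leq_mul2l h2 orbT.
by rewrite leq_mul2r.
Qed.
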